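(* For $n\ge0$ let $Q_n^L(x)=\sum_{r=0}^{n}\left[\binom{n}{r}\sum_{\ell=0}^{r}\binom{r}{\ell}\frac{1}{\ell!}\right](-x)^r$ be the coefficient polynomials of the linear transformation $x^n\mapsto L_n(x)$. Then, as formal power series in $w$, $$\frac{\exp\left(-\frac{wx}{w(x-1)+1}\right)}{w(x-1)+1}=\sum_{n=0}^\infty Q_n^L(x)w^n.$$
   Context: $L_n(x)=\sum_{k=0}^n\binom{n}{k}\frac{(-x)^k}{k!}$ is the $n$th Laguerre polynomial; coefficient polynomials $Q_k$ of a linear operator $T$ on $\mathbb{C}[x]$ are defined by the unique representation $T=\sum_k\frac{Q_k(x)}{k!}D^k$, $D=d/dx$. *)

(* Defs.v *)
(* Formal power series in w with coefficients in C[x],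
   modelled as coefficient functions nat -> {poly R}, R a numFieldType
   (any characteristic-0 number field, e.g. algC). *)
From HB Require Import structures.
From mathcomp Require Import all_boot all_order all_algebra.
Set Implicit Arguments. Unset Strict Implicit. Unset Printing Implicit Defensive.
Import Order.TTheory GRing.Theory Num.Theory.
Local Open Scope ring_scope.

Section FPS.
Variable R : numFieldType.
Local Notation A := {poly R}.

Definition fps := nat -> A.

Definition fps_C (a : A) : fps := fun n => if n == 0%N then a else 0.
Definition fps_X : fps := fun n => if n == 1%N then 1 else 0.
Definition fps_add (f g : fps) : fps := fun n => f n + g n.
Definition fps_opp (f : fps) : fps := fun n => - f n.
Definition fps_mul (f g : fps) : fps :=
  fun n => \sum_(i < n.+1) f i * g (n - i)%N.
Definition fps_pow (f : fps) (k : nat) : fps := iter k (fps_mul f) (fps_C 1).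

(* multiplicative inverse (when the constant term f 0 is a unit):
   g 0 = (f 0)^-1,  g m = -(f 0)^-1 * \sum_(1 <= i <= m) f i * g (m - i) *)
Fixpoint fps_inv_seq (f : fps) (n : nat) : seq A :=
  match n with
  | 0 => [:: (f 0%N)^-1]
  | n'.+1 => let s := fps_inv_seq f n' in
      rcons s (- (f 0%N)^-1 * \sum_(i < n'.+1) f i.+1 * nth 0 s (n' - i)%N)
  end.
Definition fps_inv (f : fps) : fps := fun n => nth 0 (fps_inv_seq f n) n.

(* exponential of a series with zero constant term:
   exp s = \sum_k s^k / k!, the sum being finite in each coefficient *)
Definition fps_exp (s : fps) : fps :=
  fun n => \sum_(k < n.+1) ((k`!)%:R^-1 : R) *: fps_pow s k n.

End FPS.

Definition QL (R : numFieldType) (n : nat) : {poly R} :=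
  \sum_(r < n.+1)
     (('C(n, r))%:R * \sum_(l < r.+1) ('C(r, l))%:R / (l`!)%:R) *: (- 'X) ^+ r.

Definition denomL (R : numFieldType) : fps R :=
  fps_add (fps_C 1) (fps_mul (fps_X R) (fps_C ('X - 1))).

Definition genL (R : numFieldType) : fps R :=
  fps_mul
    (fps_exp (fps_opp (fps_mul (fps_mul (fps_X R) (fps_C 'X)) (fps_inv (denomL R)))))
    (fps_inv (denomL R)).

(* Main.v *)
Require Import Defs.
From mathcomp Require Import all_boot all_order all_algebra.
From mathcomp Require Import zify ring.
Import GRing.Theory Num.Theory.
Local Open Scope ring_scope.

Lemma bin_swap (n k j : nat) : (j + k <= n)%N ->
  ('C(n, j + k) * 'C(j + k, k) = 'C(n, k) * 'C(n - k, j))%N.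
Proof.
move=> h.
have hp : (0 < k`! * j`! * (n - k - j)`!)%N by rewrite !muln_gt0 !fact_gt0.
apply/eqP; rewrite -(eqn_pmul2r hp); apply/eqP.
have e1 := bin_fact (leq_addl j k). rewrite addnK in e1.
have e2 := bin_fact h.
have e3 : ('C(n - k, j) * (j`! * (n - k - j)`!) = (n-k)`!)%N.
  by apply: bin_fact; lia.
have e4 : ('C(n, k) * (k`! * (n - k)`!) = n`!)%N by apply: bin_fact; lia.
have E : (n - k - j = n - (j + k))%N by lia.
rewrite E; rewrite E in e3.
transitivity n`!.
  by rewrite -e2 -e1; ring.
by rewrite -e4 -e3; ring.
Qed.

Lemma hockey (m k : nat) :
  (\sum_(j < m.+1) 'C(m - j + k, k) = 'C(m + k.+1, k.+1))%N.
Proof.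
elim: m => [|m IH]; first by rewrite big_ord1 subnn !add0n !binn.
rewrite big_ord_recl /=.
under eq_bigr => i _ do rewrite /bump /= add1n subSS.
rewrite IH subn0.
have -> : (m.+1 + k.+1 = (m + k.+1).+1)%N by lia.
rewrite binS addnC; congr (_ + _)%N; congr 'C(_,_); lia.
Qed.

Section S.
Variable R : numFieldType.
Local Notation A := {poly R}.
Local Notation B := {poly A}.

Definition aa : A := 1 - 'X.

Lemma denomE m : denomL R m = if m == 0%N then 1 else if m == 1%N then 'X - 1 else 0.
Proof.
rewrite /denomL /fps_add /fps_mul /fps_C /fps_X big_ord_recr /= subnn /=.
rewrite big1 ?add0r; last first.
  by move=> i _; rewrite (_ : (m - i == 0)%N = false) ?mulr0 //; apply/negbTE; rewrite subn_eq0 -ltnNge.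
by case: m => [|[|m]] /=; rewrite ?mul1r ?mul0r ?addr0 ?add0r.
Qed.

Lemma inv_seqE n : fps_inv_seq (denomL R) n = mkseq (fun i => aa ^+ i) n.+1.
Proof.
elim: n => [|n IH] /=; first by rewrite denomE /= invr1 /mkseq /= expr0.
rewrite IH [in RHS]mkseqS; congr (rcons _ _).
rewrite denomE /= invr1 mulN1r big_ord_recl /= denomE /= nth_mkseq ?subn0 //.
rewrite big1 ?addr0; last first.
  by move=> i _; rewrite denomE /= mul0r.
by rewrite exprS /aa; ring.
Qed.

Lemma invE m : fps_inv (denomL R) m = aa ^+ m.
Proof. by rewrite /fps_inv inv_seqE nth_mkseq. Qed.

Variable N : nat.
Definition PP (f : fps R) : B := \poly_(i < N) f i.
Definition eqN (p q : B) := forall i, (i < N)%N -> p`_i = q`_i.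

Lemma coefP f i : (i < N)%N -> (PP f)`_i = f i.
Proof. by move=> h; rewrite coef_poly h. Qed.

Lemma eqN_trans p q r : eqN p q -> eqN q r -> eqN p r.
Proof. by move=> h1 h2 i hi; rewrite h1 ?h2. Qed.

Lemma eqN_mul p p' q q' : eqN p p' -> eqN q q' -> eqN (p * q) (p' * q').
Proof.
move=> hp hq i hi; rewrite !coefM; apply: eq_bigr => j _.
have hj : (j < N)%N by apply: leq_ltn_trans hi; rewrite -ltnS.
by rewrite hp ?hq //; apply: leq_ltn_trans (leq_subr _ _) hi.
Qed.

Lemma eqN_pow p q k : eqN p q -> eqN (p ^+ k) (q ^+ k).
Proof.
move=> h; elim: k => [|k IH]; first by move=> i _; rewrite !expr0.
by rewrite !exprS; apply: eqN_mul.
Qed.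

Lemma P_mul f g : eqN (PP (fps_mul f g)) (PP f * PP g).
Proof.
move=> i hi; rewrite coefP // coefM /fps_mul; apply: eq_bigr => j _.
have hj : (j < N)%N by apply: leq_ltn_trans hi; rewrite -ltnS.
by rewrite !coefP //; apply: leq_ltn_trans (leq_subr _ _) hi.
Qed.

Lemma P_pow f k : eqN (PP (fps_pow f k)) (PP f ^+ k).
Proof.
elim: k => [|k IH].
  by move=> i hi; rewrite coefP // expr0 coef1 /fps_pow /= /fps_C; case: i {hi}.
apply: eqN_trans (P_mul _ _) _; rewrite exprS; apply: eqN_mul => //.
Qed.

Lemma P_opp f : eqN (PP (fps_opp f)) (- PP f).
Proof. by move=> i hi; rewrite coefN !coefP. Qed.

Lemma P_C c : eqN (PP (fps_C c)) c%:P.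
Proof. by move=> i hi; rewrite coefP // coefC /fps_C. Qed.

Lemma P_X : eqN (PP (fps_X R)) 'X.
Proof. by move=> i hi; rewrite coefP // coefX /fps_X; case: (i == 1%N). Qed.

Lemma eqN_refl p : eqN p p. Proof. by []. Qed.

Definition Pinv := PP (fps_inv (denomL R)).
Definition ss := fps_opp (fps_mul (fps_mul (fps_X R) (fps_C 'X)) (fps_inv (denomL R))).

Lemma P_ss : eqN (PP ss) ('X * ((- 'X)%:P * Pinv)).
Proof.
apply: eqN_trans (P_opp _) _.
have h : eqN (PP (fps_mul (fps_mul (fps_X R) (fps_C 'X)) (fps_inv (denomL R))))
            ('X * ('X)%:P * Pinv).
  apply: eqN_trans (P_mul _ _) _; apply: eqN_mul => //.
  apply: eqN_trans (P_mul _ _) _; apply: eqN_mul; [exact: P_X | exact: P_C].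
by move=> i hi; rewrite coefN h // polyCN mulNr mulrN coefN mulrA.
Qed.

Lemma Pinv_pow k m : (m < N)%N -> (Pinv ^+ k.+1)`_m = ('C(m + k, k))%:R * aa ^+ m.
Proof.
elim: k m => [|k IH] m hm.
  by rewrite expr1 coefP // invE addn0 bin0 mul1r.
rewrite exprS coefM.
transitivity (\sum_(j < m.+1) ('C(m - j + k, k))%:R * aa ^+ m).
  apply: eq_bigr => j _.
  have hj : (j <= m)%N by rewrite -ltnS.
  rewrite coefP ?invE; last by apply: leq_ltn_trans hm.
  rewrite IH; last by apply: leq_ltn_trans (leq_subr _ _) hm.
  by rewrite mulrCA -exprD subnKC.
by rewrite -mulr_suml -natr_sum hockey.
Qed.

Definition EE := fps_exp ss.
Definition WW := ((- 'X)%:P * Pinv).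
Definition QQ := \sum_(k < N) (((k`!)%:R^-1 : R)%:P)%:P * ('X * WW) ^+ k.

Lemma coef_XW k i : (('X * WW) ^+ k)`_i = if (i < k)%N then 0 else (WW ^+ k)`_(i - k).
Proof. by rewrite exprMn coefXnM. Qed.

Lemma P_EE : eqN (PP EE) QQ.
Proof.
move=> i hi; rewrite coefP // /EE /fps_exp /QQ coef_sum.
transitivity (\sum_(k < i.+1) (((k`!)%:R^-1 : R)%:P) * (('X * WW) ^+ k)`_i).
  apply: eq_bigr => k _.
  rewrite -mul_polyC -(@coefP _ _ hi) (P_pow _ _ _ hi).
  by rewrite (eqN_pow _ _ k P_ss _ hi).
rewrite (big_ord_widen N (fun k => (((k`!)%:R^-1 : R)%:P) * (('X * WW) ^+ k)`_i)) //.
rewrite big_mkcond /=; apply: eq_bigr => k _.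
rewrite coefCM; case: ifP => // /negbT; rewrite -leqNgt => h.
by rewrite coef_XW h mulr0.
Qed.

End S.

Lemma genL_eq (R : numFieldType) n : genL R n =
  \sum_(k < n.+1) (((k`!)%:R^-1 : R)%:P * ((- 'X) ^+ k * ('C(n, k)%:R * (1 - 'X) ^+ (n - k)))).
Proof.
have hn : (n < n.+1)%N by [].
rewrite /genL.
rewrite -(@coefP R n.+1 _ _ hn) (@P_mul R n.+1 _ _ _ hn).
rewrite -/(EE R) -/(Pinv R n.+1).
rewrite (@eqN_mul R n.+1 _ _ _ _ (@P_EE R n.+1) (@eqN_refl R n.+1 (Pinv R n.+1)) _ hn).
rewrite /QQ mulr_suml coef_sum; apply: eq_bigr => k _.
rewrite -mulrA coefCM; congr (_ * _).
rewrite exprMn -mulrA coefXnM ltnNge (_ : (k <= n)%N) /=; last by rewrite -ltnS.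
rewrite /WW exprMn -mulrA -exprSr -polyC_exp coefCM (@Pinv_pow R n.+1); last by rewrite ltnS leq_subr.
by rewrite subnK // -ltnS.
Qed.

Local Notation x := (- 'X : {poly _}).
Lemma final (R : numFieldType) n :
  \sum_(k < n.+1) (((k`!)%:R^-1 : R)%:P * ((- 'X) ^+ k * ('C(n, k)%:R * (1 - 'X) ^+ (n - k))))
  = QL R n.
Proof.
have E1 : (1 - 'X : {poly R}) = - 'X + 1 by rewrite addrC.
transitivity (\sum_(k < n.+1) \sum_(j < (n - k).+1)
   (((k`!)%:R^-1 * 'C(n, k)%:R * 'C(n - k, j)%:R : R) *: x ^+ (k + j))).
  apply: eq_bigr => k _.
  rewrite E1.
  rewrite exprD1n !mulr_sumr; apply: eq_bigr => j _.
  rewrite -mul_polyC !polyCM !polyC_natr exprD -mulr_natr; ring.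
rewrite /QL.
transitivity (\sum_(r < n.+1) \sum_(l < n.+1)
   (('C(n, r)%:R * ('C(r, l)%:R / (l`!)%:R) : R) *: x ^+ r)); last first.
  apply: eq_bigr => r _; symmetry; rewrite mulr_sumr scaler_suml.
  rewrite (big_ord_widen n.+1 (fun l => (('C(n, r)%:R * ('C(r, l)%:R / (l`!)%:R) : R) *: x ^+ r))); last by rewrite ltnS -ltnS.
  rewrite big_mkcond /=; apply: eq_bigr => l _.
  by case: ifP => // /negbT; rewrite -leqNgt => h; rewrite (bin_small h) !mul0r mulr0 scale0r.
rewrite exchange_big /=; apply: eq_bigr => k _.
have hk : (k <= n.+1)%N by apply: ltnW.
rewrite -(big_mkord predT (fun r => (('C(n, r)%:R * ('C(r, k)%:R / (k`!)%:R) : R) *: x ^+ r))).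
rewrite (big_cat_nat (n:=k)) //= [X in X + _]big1_seq ?add0r; last first.
  move=> r; rewrite mem_index_iota => /andP [_ h].
  by rewrite (bin_small h) mul0r mulr0 scale0r.
have := big_addn 0 n.+1 k predT (fun r => (('C(n, r)%:R * ('C(r, k)%:R / (k`!)%:R) : R) *: x ^+ r)).
rewrite add0n => ->.
rewrite big_mkord (_ : (n.+1 - k = (n - k).+1)%N); last by have := ltn_ord k; lia.
apply: eq_bigr => j _.
have hj : (j + k <= n)%N by have := ltn_ord j; have := ltn_ord k; lia.
rewrite addnC; congr (_ *: _).
by rewrite mulrA -natrM bin_swap // natrM; ring.
Qed.

Theorem theorem6p1 (R : numFieldType) (n : nat) : genL R n = QL R n.
Proof. by rewrite genL_eq final. Qed.
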